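(* Let $P$ be a finite semipure poset of length $n$, $t\ge1$, $\lambda_P:\mathrm{Cov}(\hat P)\to L_P$ an EL-labeling, $\lambda$ the induced EL-labeling of $\widehat{P*T_{t,n}}$, and $m\in\mathbb N$. Then the number of ascent free maximal chains of $\widehat{P*T_{t,n}}$ of length $m+2$ under $\lambda$ equals $$\sum_{\substack{w\in\mathrm{NDA}_{m+2}(L_P)\\ w_1\not\le w_2,\ w_{m+1}\not\le w_{m+2}}} c(w)\,t^{\mathrm{asc}(w)}(1+t)^{m-2\,\mathrm{asc}(w)}+\sum_{\substack{w\in\mathrm{NDA}_{m+2}(L_P)\\ w_1\not\le w_2,\ w_{m+1}\le w_{m+2}}} c(w)\,t^{\mathrm{asc}(w)}(1+t)^{m+1-2\,\mathrm{asc}(w)},$$ where $c(w)$ is the number of maximal chains of $\hat P$ of length $m+2$ whose label sequence under $\lambda_P$ is $w$.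
   Context: Rees product $P*Q$ of semipure posets (rank $r_P(x)$ = common length of maximal chains of $P_{\le x}$): the set $\{(p,q): r_P(p)\ge r_Q(q)\}$ with $(p_1,q_1)\le(p_2,q_2)$ iff $p_1\le p_2$, $q_1\le q_2$, $r_P(p_2)-r_P(p_1)\ge r_Q(q_2)-r_Q(q_1)$. $T_{t,n}$: sequences over $\{1,\dots,t\}$ of length $\le n$ ordered by prefix, minimum $\hat 0_T$, rank = length. $\hat Q$: $Q$ with new minimum and maximum adjoined; for $\hat P$ these are $\hat 0_P,\hat 1_P$. An edge labeling $\lambda:\mathrm{Cov}(Q)\to L$ ($L$ a poset) of a bounded poset is an EL-labeling if each interval $[x,y]$ has a unique maximal chain with weakly increasing labels and its label sequence lexicographically precedes those of all other maximal chains of $[x,y]$. The induced labeling $\lambda$ of $\widehat{P*T_{t,n}}$ takes values in $L_P\times\{0<1\}$ (product order): the minimum is identified with $(\hat 0_P,\hat 0_T)$; for a cover $(x,k)\lessdot(y,l)$ with $(y,l)\ne\hat 1$, $\lambda=(\lambda_P(x,y),1)$ if $k<l$ and $(\lambda_P(x,y),0)$ if $k=l$; for $(x,k)\lessdot\hat 1$, $\lambda=(\lambda_P(x,\hat 1_P),0)$. A maximal chain is ascent free if no two consecutive labels $a,b$ satisfy $a\le b$. For a word $w$ of length $N$ over a poset $A$: $i\in[N-1]$ is an ascent if $w_i\le w_{i+1}$; $\mathrm{asc}(w)$ counts ascents; a double ascent is $i\in[N-2]$ with $w_i\le w_{i+1}\le w_{i+2}$; $\mathrm{NDA}_N(A)$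 is the set of length-$N$ words over $A$ without double ascents. *)

(* Defs.v *)
From mathcomp Require Import all_boot all_order.
Set Implicit Arguments. Unset Strict Implicit. Unset Printing Implicit Defensive.
Import Order.TTheory.
Local Open Scope order_scope.

Section Gen.
Variables (X : finType) (le : rel X).

Definition ltr (x y : X) := (x != y) && le x y.
Definition covr (x y : X) := ltr x y && [forall z, ~~ (ltr x z && ltr z y)].

Definition is_chain (x y : X) (c : seq X) :=
  if c is z :: s then [&& z == x, path covr z s & last z s == y] else false.

Definition labels {A : Type} (lam : X -> X -> A) (c : seq X) : seq A :=
  if c is z :: s then pairmap lam z s else [::].
End Gen.

Definition lex_lt {dL} {L : porderType dL} (w w' : seq L) : Prop :=
  (exists u a b v v', w = u ++ a :: v /\ w' = u ++ b :: v' /\ a < b)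
  \/ (exists u, u <> [::] /\ w' = w ++ u).

Definition EL_labeling (X : finType) (le : rel X) {dL} {L : porderType dL}
  (lam : X -> X -> L) : Prop :=
  forall x y, le x y ->
    exists c, [/\ is_chain le x y c, sorted <=%O (labels lam c),
      (forall c', is_chain le x y c' -> sorted <=%O (labels lam c') -> c' = c) &
      (forall c', is_chain le x y c' -> c' <> c -> lex_lt (labels lam c) (labels lam c'))].

Definition hatT (X : finType) : finType := (X + bool)%type.
Definition hbot {X : finType} : hatT X := inr false.
Definition htop {X : finType} : hatT X := inr true.
Definition hat_le {X : finType} (le : rel X) : rel (hatT X) :=
  fun a b => match a, b with
  | inr false, _ => true
  | _, inr true => true
  | inl x, inl y => le x y
  | _, _ => false
  end.

Definition nchains (X : finType) (le : rel X) (bot top : X) {A : Type}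
  (lam : X -> X -> A) (k : nat) (Q : seq A -> bool) : nat :=
  #|[pred c : k.+1.-tuple X | is_chain le bot top c && Q (labels lam c)]|.

Section Rank.
Context {d : Order.disp_t} (P : finPOrderType d).

Definition minimalP (x : P) := [forall y : P, (y <= x) ==> (y == x)].
Definition chain_toP (c : seq P) (x : P) :=
  if c is z :: s then [&& minimalP z, path (covr <=%O) z s & last z s == x]
  else false.
Definition semipure : Prop :=
  forall x c c', chain_toP c x -> chain_toP c' x -> size c = size c'.
Definition rankP (x : P) : nat :=
  \max_(k < #|P|.+1 | [exists c : k.+1.-tuple P, chain_toP c x]) (k : nat).
Definition poset_length (n : nat) : Prop :=
  (exists x, rankP x = n) /\ (forall x, rankP x <= n)%N.
End Rank.

(* ---------- T_{t,n}: words over {1..t} (here 'I_t) of length <= n ---------- *)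
Definition Tt (t n : nat) : finType := {k : 'I_n.+1 & k.-tuple 'I_t}.
Definition tseq {t n} (q : Tt t n) : seq 'I_t := tagged q.

Section Rees.
Context {d : Order.disp_t} (P : finPOrderType d) (t n : nat).

Definition rees_ok (pq : P * Tt t n) : bool := (size (tseq pq.2) <= rankP pq.1)%N.
Definition Rees : finType := {pq : P * Tt t n | rees_ok pq}.
(* (p1,q1) <= (p2,q2) iff p1 <= p2, q1 <= q2, r(p2)-r(p1) >= r(q2)-r(q1) *)
Definition rees_le (a b : Rees) : bool :=
  let: (p1, q1) := val a in let: (p2, q2) := val b in
  [&& p1 <= p2, prefix (tseq q1) (tseq q2)
    & (rankP p1 + size (tseq q2) <= rankP p2 + size (tseq q1))%N].

Definition proj_P (y : hatT Rees) : hatT P :=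
  match y with inl a => inl (val a).1 | inr b => inr b end.
Definition proj_T (y : hatT Rees) : seq 'I_t :=
  match y with inl a => tseq (val a).2 | inr _ => [::] end.

Definition induced_lab {dL} {L : porderType dL} (lamP : hatT P -> hatT P -> L)
  (x y : hatT Rees) : L * bool :=
  match y with
  | inr true => (lamP (proj_P x) htop, false)
  | _ => (lamP (proj_P x) (proj_P y),
          (proj_T x != proj_T y) && prefix (proj_T x) (proj_T y))
  end.
End Rees.

Definition prod_le {dL} {L : porderType dL} (a b : L * bool) : bool :=
  (a.1 <= b.1) && (a.2 ==> b.2).

Definition ascs {A : Type} (r : A -> A -> bool) (w : seq A) : seq bool :=
  [seq r ab.1 ab.2 | ab <- zip w (behead w)].
Definition asc {A : Type} (r : A -> A -> bool) (w : seq A) : nat := count id (ascs r w).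
Definition ascent_free {A : Type} (r : A -> A -> bool) (w : seq A) : bool :=
  ~~ has id (ascs r w).
Definition NDA {A : Type} (r : A -> A -> bool) (N : nat) (w : seq A) : bool :=
  (size w == N) &&
  ~~ has (fun bb : bool * bool => bb.1 && bb.2) (zip (ascs r w) (behead (ascs r w))).

(* Main.v *)
Require Import Defs.
From mathcomp Require Import all_boot all_order zify.
Set Implicit Arguments. Unset Strict Implicit. Unset Printing Implicit Defensive.
Import Order.TTheory.

Section HatGen.
Variables (X : finType) (le : rel X).

Lemma covr_hat_ll x y : covr (hat_le le) (inl x) (inl y) = covr le x y.
Proof.
rewrite /covr /ltr /=; congr andb; apply/forallP/forallP => H z.
  by have := H (inl z).
by case: z => [z|[]] //=; have := H z.
Qed.

Lemma covr_hat_bl x : covr (hat_le le) hbot (inl x) = [forall y, ~~ ltr le y x].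
Proof.
rewrite /covr /ltr /=; apply/forallP/forallP => H z.
  by have := H (inl z).
by case: z => [z|[]] //=; have := H z.
Qed.

Lemma covr_hat_lt x : covr (hat_le le) (inl x) htop = [forall y, ~~ ltr le x y].
Proof.
rewrite /covr /ltr /=; apply/forallP/forallP => H z.
  by have := H (inl z); rewrite andbT.
by case: z => [z|[]] //=; rewrite andbT; have := H z.
Qed.

Lemma covr_hat_t z : covr (hat_le le) htop z = false.
Proof. by rewrite /covr /ltr; case: z => [z|[]]. Qed.

Lemma covr_hat_b z : covr (hat_le le) z hbot = false.
Proof. by rewrite /covr /ltr; case: z => [z|[]]. Qed.

End HatGen.

Section RankFacts.
Context {d : Order.disp_t} (P : finPOrderType d).
Local Open Scope order_scope.

Lemma ltrE (x y : P) : ltr <=%O x y = (x < y).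
Proof. by rewrite /ltr lt_neqAle eq_sym. Qed.

Lemma covr_lt (x y : P) : covr <=%O x y -> x < y.
Proof. by case/andP; rewrite ltrE. Qed.

Lemma covrP (x y : P) : covr <=%O x y = (x < y) && [forall z, ~~ ((x < z) && (z < y))].
Proof.
rewrite /covr ltrE; congr andb; apply/forallP/forallP => H z; by have := H z; rewrite !ltrE.
Qed.

Lemma minimalPE (x : P) : minimalP x = [forall y, ~~ (y < x)].
Proof.
apply/forallP/forallP => H y; have := H y; rewrite lt_neqAle.
  by case: (y <= x); rewrite ?andbT ?andbF //= => /eqP->; rewrite eqxx.
by case: (y <= x); rewrite ?andbT //= negbK.
Qed.

Lemma path_covr_lt (z : P) s : path (covr <=%O) z s -> path <%O z s.
Proof. by apply: sub_path => a b /covr_lt. Qed.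

Lemma chain_size c (x : P) : chain_toP c x -> (size c <= #|P|)%N.
Proof.
case: c => // z s /and3P[_ Hp _].
have U : uniq (z :: s) by apply: lt_sorted_uniq; apply: path_covr_lt.
by rewrite -(card_uniqP U) max_card.
Qed.

Lemma cover_between (x y : P) : x < y -> exists z, (x <= z) && covr <=%O z y.
Proof.
move=> xy.
have Sx : (x <= x) && (x < y) by rewrite lexx.
case: (@arg_maxnP _ x (fun z : P => (x <= z) && (z < y)) (fun z : P => #|[pred w | w < z]|) Sx) => z /andP[xz zy] Hmax.
exists z; rewrite xz covrP zy /=; apply/forallP => w; apply/negP => /andP[zw wy].
have := Hmax w; rewrite (le_trans xz (ltW zw)) wy => /(_ isT).
apply/negP; rewrite -ltnNge; apply: proper_card; apply/properP; split.
  by apply/subsetP => u; rewrite !inE => uz; apply: lt_trans uz zw.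
by exists z; rewrite !inE ?ltxx.
Qed.

Lemma chain_exists (x : P) : exists c, chain_toP c x.
Proof.
move: {2}#|[pred w | w < x]| (leqnn #|[pred w | w < x]|) => k.
elim: k x => [|k IH] x Hk.
  exists [:: x]; rewrite /= eqxx andbT minimalPE; apply/forallP => y.
  by apply/negP => yx; move: Hk; rewrite leqn0 => /eqP/card0_eq/(_ y); rewrite !inE yx.
case: (boolP (minimalP x)) => mx.
  by exists [:: x]; rewrite /= mx eqxx.
move: mx; rewrite minimalPE => /forallPn[y]; rewrite negbK => yx.
case: (cover_between yx) => z /andP[_ zx].
have zx' := covr_lt zx.
have [|c Hc] := IH z.
  rewrite -ltnS; apply: leq_trans Hk; apply: proper_card; apply/properP; split.
    by apply/subsetP => u; rewrite !inE => uz; apply: lt_trans uz zx'.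
  by exists z; rewrite !inE ?ltxx.
case: c Hc => // a s /and3P[ma ps /eqP ls].
exists (a :: rcons s x); rewrite /= ma rcons_path ps ls zx last_rcons eqxx.
by [].
Qed.

Hypothesis SP : semipure P.

Lemma rank_chain c (x : P) : chain_toP c x -> size c = (rankP x).+1.
Proof.
move=> Hc.
have c0 : (0 < size c)%N by case: c Hc.
have Hk : ((size c).-1 < #|P|.+1)%N by rewrite ltnS; apply: leq_trans (leq_pred _) (chain_size Hc).
rewrite /rankP (@big_pred1 _ _ _ _ (Ordinal Hk)) /= ?prednK //.
move=> k /=; apply/existsP/eqP.
  case=> c' Hc'; apply: val_inj => /=.
  by rewrite (SP Hc Hc') size_tuple.
move=> ->; have E : size c = (Ordinal Hk).+1 by rewrite /= prednK.
by exists (tcast E (in_tuple c)); rewrite val_tcast.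
Qed.

Lemma rank_min (x : P) : minimalP x -> rankP x = 0%N.
Proof.
move=> mx; have : chain_toP [:: x] x by rewrite /= mx eqxx.
by move/rank_chain => [].
Qed.

Lemma rank_cov (x y : P) : covr <=%O x y -> rankP y = (rankP x).+1.
Proof.
move=> xy; case: (chain_exists x) => c Hc.
have Hr := rank_chain Hc.
case: c Hc Hr => // a s /and3P[ma ps /eqP ls] Hr.
have : chain_toP (a :: rcons s y) y.
  by rewrite /= ma rcons_path ps ls xy last_rcons eqxx.
by move/rank_chain; rewrite /= size_rcons -Hr => -[].
Qed.

Lemma rank_lt (x y : P) : x < y -> (rankP x < rankP y)%N.
Proof.
move: {2}#|[pred w | w < y]| (leqnn #|[pred w | w < y]|) => k.
elim: k y => [|k IH] y Hk xy.
  by move: Hk; rewrite leqn0 => /eqP/card0_eq/(_ x); rewrite !inE xy.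
case: (cover_between xy) => z /andP[xz zy].
rewrite (rank_cov zy) ltnS.
case: (eqVneq x z) => [->//|nxz].
have xz' : x < z by rewrite lt_neqAle nxz.
apply: ltnW; apply: IH => //.
have zy' := covr_lt zy.
rewrite -ltnS; apply: leq_trans Hk; apply: proper_card; apply/properP; split.
  by apply/subsetP => u; rewrite !inE => uz; apply: lt_trans uz zy'.
by exists z; rewrite !inE ?ltxx.
Qed.

Lemma rank_le (x y : P) : x <= y -> (rankP x <= rankP y)%N.
Proof. by rewrite le_eqVlt => /orP[/eqP->//|/rank_lt/ltnW]. Qed.

End RankFacts.

Lemma prefix_size_eq (T : eqType) (s1 s2 : seq T) :
  prefix s1 s2 -> (size s2 <= size s1)%N -> s1 = s2.
Proof. by rewrite prefixE => /eqP E Hs; rewrite -E take_oversize. Qed.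

Lemma prefix_take2 (T : eqType) (s1 s2 : seq T) k :
  prefix s1 s2 -> (size s1 <= k)%N -> prefix s1 (take k s2).
Proof.
rewrite !prefixE => /eqP E Hk; rewrite take_takel //; exact/eqP.
Qed.

Section ReesFacts.
Context {d : Order.disp_t} (P : finPOrderType d) (t n : nat).
Local Open Scope order_scope.
Hypothesis SP : semipure P.
Hypothesis Hn : forall x : P, (rankP x <= n)%N.

Lemma tseq_inj : injective (@tseq t n).
Proof.
case=> k1 s1 [k2 s2]; rewrite /tseq /= => E.
have kk : k1 = k2 by apply: val_inj; rewrite /= -(size_tuple s1) -(size_tuple s2) E.
subst k2; have -> : s1 = s2 by apply: val_inj.
by [].
Qed.

Definition toT (q : seq 'I_t) : Tt t n :=
  odflt (existT _ ord0 [tuple]) [pick T : Tt t n | tseq T == q].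

Lemma tseq_toT q : (size q <= n)%N -> tseq (toT q) = q.
Proof.
rewrite -ltnS => H; rewrite /toT; case: pickP => [T /eqP //|/(_ (existT _ (Ordinal H) (in_tuple q)))].
by rewrite /tseq /= eqxx.
Qed.

Definition pR (a : Rees P t n) : P := (sval a).1.
Definition qR (a : Rees P t n) : seq 'I_t := tseq (sval a).2.

Lemma okR (a : Rees P t n) : (size (qR a) <= rankP (pR a))%N.
Proof. exact: (svalP a). Qed.

Lemma reesE (a b : Rees P t n) : rees_le a b =
  [&& pR a <= pR b, prefix (qR a) (qR b) & (rankP (pR a) + size (qR b) <= rankP (pR b) + size (qR a))%N].
Proof. by case: a => [[? ?] ?]; case: b => [[? ?] ?]. Qed.

Lemma reesP (a b : Rees P t n) : pR a = pR b -> qR a = qR b -> a = b.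
Proof.
case: a => [[? ?] ?]; case: b => [[? ?] ?]; rewrite /pR /qR /= => E1 E; apply: val_inj; rewrite /= E1.
by rewrite (tseq_inj E).
Qed.

Lemma ok0 (x : P) : rees_ok (x, toT [::]).
Proof. by rewrite /rees_ok /= tseq_toT. Qed.

Definition mkR (x : P) (q : seq 'I_t) : Rees P t n :=
  insubd (exist _ (x, toT [::]) (ok0 x)) (x, toT q).

Lemma mkR_p x q : pR (mkR x q) = x.
Proof. by rewrite /pR /mkR /insubd; case: insubP => [u _ ->|]. Qed.

Lemma mkR_q x q : (size q <= rankP x)%N -> qR (mkR x q) = q.
Proof.
move=> H; have Hq : (size q <= n)%N by apply: leq_trans H (Hn x).
have ok : (x, toT q) \in rees_ok (t:=t) (n:=n) by rewrite unfold_in /rees_ok /= tseq_toT.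
by rewrite /qR /mkR (insubdK _ ok) /= tseq_toT.
Qed.

Lemma mkR_val (a : Rees P t n) : mkR (pR a) (qR a) = a.
Proof. by apply: reesP; rewrite ?mkR_p ?mkR_q // okR. Qed.

Lemma ltrR (a b : Rees P t n) : ltr (@rees_le _ P t n) a b = (a != b) && rees_le a b.
Proof. by []. Qed.

Lemma rank_mono (x y : P) : x <= y -> (rankP x <= rankP y)%N.
Proof. exact: rank_le. Qed.

Lemma minimalR (a : Rees P t n) :
  [forall b, ~~ ltr (@rees_le _ P t n) b a] = minimalP (pR a) && (qR a == [::]).
Proof.
apply/forallP/andP.
  move=> H.
  have mp : minimalP (pR a).
    rewrite minimalPE; apply/forallP => z; apply/negP => zp.
    have rz := rank_lt SP zp.
    have ra := okR a.
    pose k := (size (qR a) - (rankP (pR a) - rankP z))%N.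
    have Hk : (size (take k (qR a)) <= rankP z)%N by rewrite /k size_take_min; lia.
    have := H (mkR z (take k (qR a))); rewrite ltrR reesE mkR_p mkR_q //.
    rewrite (ltW zp) prefix_take /= size_take_min.
    have -> : (mkR z (take k (qR a)) != a).
      by apply/negP => /eqP E; move: zp; rewrite -E mkR_p ltxx.
    have L : forall r rz s, (rz < r -> s <= r -> rz + s <= r + minn (s - (r - rz)) s)%N by move=> *; lia.
    by rewrite /= /k; apply/negP/negPn; apply: L.
  split => //; have := okR a; rewrite (rank_min SP mp) leqn0 size_eq0 //.
case=> mp /eqP q0 b; apply/negP; rewrite ltrR reesE => /andP[nba /and3P[bp pre rk]].
have E : pR b = pR a.
  move: mp; rewrite minimalPE => /forallP/(_ (pR b)); rewrite lt_neqAle bp andbT negbK.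
  by move/eqP.
move: pre; rewrite q0 prefixs0 => /eqP qb.
by move: nba; rewrite (reesP E) ?qb ?q0 ?eqxx.
Qed.

Lemma maximalR (a : Rees P t n) :
  [forall b, ~~ ltr (@rees_le _ P t n) a b] = [forall y, ~~ ltr <=%O (pR a) y].
Proof.
apply/forallP/forallP.
  move=> H y; rewrite ltrE; apply/negP => py.
  have ra := okR a; have ry := rank_lt SP py.
  have := H (mkR y (qR a)); rewrite ltrR reesE mkR_p mkR_q; last by lia.
  have -> : (a != mkR y (qR a)).
    by apply/negP => /eqP E; move: py; rewrite {1}E mkR_p ltxx.
  by rewrite (ltW py) prefix_refl /=; apply/negP/negPn; lia.
move=> H b; apply/negP; rewrite ltrR reesE => /andP[nab /and3P[ab pre rk]].
have E : pR a = pR b.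
  by move: (H (pR b)); rewrite ltrE lt_neqAle ab andbT negbK => /eqP.
rewrite E in rk; have Eq : qR a = qR b by apply: prefix_size_eq => //; rewrite leq_add2l in rk.
by move: nab; rewrite (reesP E Eq) eqxx.
Qed.

Lemma covrR (a b : Rees P t n) :
  covr (@rees_le _ P t n) a b =
  [&& covr <=%O (pR a) (pR b), prefix (qR a) (qR b) & (size (qR b) <= (size (qR a)).+1)%N].
Proof.
apply/idP/idP.
  case/andP; rewrite ltrR reesE => /andP[nab /and3P[ab pre rk]] /forallP H.
  have pab : pR a < pR b.
    rewrite lt_neqAle ab andbT; apply/negP => /eqP E.
    rewrite E in rk; have Eq : qR a = qR b by apply: prefix_size_eq => //; rewrite leq_add2l in rk.
    by move: nab; rewrite (reesP E Eq) eqxx.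
  have cab : covr <=%O (pR a) (pR b).
    rewrite covrP pab /=; apply/forallP => z; apply/negP => /andP[az zb].
    have ra := okR a; have rb := okR b.
    have raz := rank_lt SP az; have rzb := rank_lt SP zb.
    pose k := (size (qR a) + (rankP z - rankP (pR a)))%N.
    have Hk : (size (take k (qR b)) <= rankP z)%N by rewrite /k size_take_min; lia.
    have := H (mkR z (take k (qR b))); rewrite !ltrR !reesE mkR_p mkR_q //.
    rewrite (ltW az) (ltW zb) prefix_take prefix_take2 //; last by rewrite /k leq_addr.
    have -> : (a != mkR z (take k (qR b))).
      by apply/negP => /eqP E; move: az; rewrite {1}E mkR_p ltxx.
    have -> : (mkR z (take k (qR b)) != b).
      by apply/negP => /eqP E; move: zb; rewrite -{1}E mkR_p ltxx.
    rewrite /= size_take_min; apply/negP/negPn; apply/andP; split; lia.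
  by rewrite cab pre /=; have := rank_cov SP cab; lia.
case/and3P => cab pre sz.
have pab := covr_lt cab.
rewrite /covr ltrR reesE (ltW pab) pre (rank_cov SP cab) /=.
have -> : a != b by apply/negP => /eqP E; move: pab; rewrite E ltxx.
rewrite /=; apply/andP; split; first by lia.
apply/forallP => c; apply/negP; rewrite !ltrR !reesE => /andP[/andP[nac /and3P[ac pre1 rk1]] /andP[ncb /and3P[cb pre2 rk2]]].
move: cab; rewrite covrP => /andP[_ /forallP/(_ (pR c))].
rewrite !lt_neqAle ac cb !andbT negb_and !negbK => /orP[] /eqP E.
  rewrite -E in rk1; have Eq : qR a = qR c by apply: prefix_size_eq => //; rewrite leq_add2l in rk1.
  by move: nac; rewrite (reesP E Eq) eqxx.
rewrite E in rk2; have Eq : qR c = qR b by apply: prefix_size_eq => //; rewrite leq_add2l in rk2.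
by move: ncb; rewrite (reesP E Eq) eqxx.
Qed.

End ReesFacts.

Section ChainGen.
Variables (X : finType) (le : rel X).

Lemma chainE (x y : X) (c : seq X) k : size c = k.+1 ->
  is_chain le x y c <->
  [/\ nth x c 0 = x, (forall j, j < k -> covr le (nth x c j) (nth x c j.+1)) & nth x c k = y].
Proof.
case: c => // z s [Hs]; rewrite /is_chain /=; split.
  case/and3P => /eqP -> /(pathP x) H /eqP <-; split => //.
    by move=> j; rewrite -Hs => /H.
  by rewrite (last_nth x) Hs.
case=> -> H E; rewrite eqxx /=; apply/andP; split.
  by apply/(pathP x) => j; rewrite Hs => /H.
by rewrite (last_nth x) Hs E.
Qed.

Lemma size_labels {A : Type} (lam : X -> X -> A) c : size (labels lam c) = (size c).-1.
Proof. by case: c => //= z s; rewrite size_pairmap. Qed.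

Lemma nth_labels {A : Type} (lam : X -> X -> A) (a0 : A) (x0 : X) c j :
  j < (size c).-1 -> nth a0 (labels lam c) j = lam (nth x0 c j) (nth x0 c j.+1).
Proof. by case: c => //= z s Hj; rewrite (nth_pairmap x0). Qed.

Lemma covr_hat_bt (x : X) : covr (hat_le le) hbot htop = false.
Proof. by rewrite /covr /ltr /=; apply/negP => /forallP/(_ (inl x)). Qed.

End ChainGen.

Section Main.
Context {d : Order.disp_t} (P : finPOrderType d) (t n m : nat).
Context {dL : Order.disp_t} {L : porderType dL} (lamP : hatT P -> hatT P -> L).
Hypothesis SP : semipure P.
Hypothesis Hn : forall x : P, (rankP x <= n)%N.
Variable x0 : P.

Notation HP := (hatT P).
Notation HR := (hatT (Rees P t n)).
Notation leP := (hat_le (<=%O : rel P)).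
Notation leR := (hat_le (@rees_le _ P t n)).
Notation prj := (@proj_P _ P t n).
Notation pT := (@proj_T _ P t n).

Lemma covrP_bl (x : P) : covr leP hbot (inl x) = minimalP x.
Proof.
rewrite covr_hat_bl minimalPE; apply/forallP/forallP => H y; by have := H y; rewrite ltrE.
Qed.

Lemma covrP_lt (x : P) : covr leP (inl x) htop = [forall y, ~~ ltr <=%O x y].
Proof. exact: covr_hat_lt. Qed.

Lemma covr_projT (u v : HR) : v != htop ->
  covr leR u v = [&& covr leP (prj u) (prj v), prefix (pT u) (pT v)
                   & size (pT v) <= (size (pT u)).+1].
Proof.
case: v => [b|[]] Hv.
- case: u => [a|[]].
  + by rewrite covr_hat_ll covrR // covr_hat_ll.
  + by rewrite (covr_hat_t _ (inl b)) (covr_hat_t _ (inl (pR b))).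
  + rewrite covr_hat_bl minimalR //.
    have -> : covr leP (prj hbot) (prj (inl b)) = minimalP (pR b) by exact: covrP_bl.
    rewrite prefix0s /=.
    case: (boolP (minimalP (pR b))) => //= mb.
    have := okR b; rewrite (rank_min SP mb) leqn0 => /eqP sb.
    by rewrite -size_eq0; change ((size (qR b) == 0) = (size (qR b) <= 1)); rewrite sb.
- by rewrite eqxx in Hv.
- by rewrite (covr_hat_b _ u) (covr_hat_b _ (prj u)).
Qed.

Lemma covr_projTop (u : HR) : covr leR u htop = covr leP (prj u) htop.
Proof.
case: u => [a|[]].
- by rewrite covr_hat_lt maximalR // covr_hat_lt.
- by rewrite (covr_hat_t _ htop) (covr_hat_t _ htop).
- by rewrite (covr_hat_bt _ (@mkR _ P t n x0 [::])) (covr_hat_bt _ x0).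
Qed.


Definition liftR (c : HP) (q : seq 'I_t) : HR :=
  match c with inl x => inl (@mkR _ P t n x q) | inr b => inr b end.

Lemma prj_liftR c q : prj (liftR c q) = c.
Proof. by case: c => [x|b] //=; rewrite -/(pR _) mkR_p. Qed.

Lemma pT_liftR x q : size q <= rankP x -> pT (liftR (inl x) q) = q.
Proof. by move=> H; rewrite /= -/(qR _) mkR_q. Qed.

Definition qs (s : {ffun 'I_m -> option 'I_t}) (j : nat) : seq 'I_t :=
  pmap id (take j.-1 (fgraph s)).

Lemma size_fgraph (s : {ffun 'I_m -> option 'I_t}) : size (fgraph s) = m.
Proof. by rewrite size_tuple card_ord. Qed.

Lemma qs_size s j : size (qs s j) <= j.-1.
Proof.
rewrite /qs size_pmap; apply: leq_trans (count_size _ _) _.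
by rewrite size_take_min geq_minl.
Qed.

Lemma qs0 s : qs s 0 = [::]. Proof. by rewrite /qs take0. Qed.
Lemma qs1 s : qs s 1 = [::]. Proof. by rewrite /qs take0. Qed.

Lemma qsS s j : 0 < j -> qs s j.+1 = qs s j ++ pmap id [:: nth None (fgraph s) j.-1].
Proof.
case: j => // j _; rewrite /qs /=.
case: (ltnP j (size (fgraph s))) => Hj.
  by rewrite (take_nth None Hj) -cats1 pmap_cat.
by rewrite !take_oversize ?nth_default ?cats0 // ltnW.
Qed.

Lemma qs_step s j : prefix (qs s j) (qs s j.+1) && (size (qs s j.+1) <= (size (qs s j)).+1).
Proof.
case: j => [|j]; first by rewrite qs0 qs1.
rewrite (@qsS s j.+1) // prefix_prefix size_cat /=.
by case: (nth None (codom s) j) => [?|] /=; rewrite ?addn1 ?addn0.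
Qed.

Definition build (C : seq HP) (s : {ffun 'I_m -> option 'I_t}) : (m + 2).+1.-tuple HR :=
  [tuple liftR (nth hbot C i) (qs s i) | i < (m + 2).+1].

Lemma nth_build C s j : j < (m + 2).+1 ->
  nth hbot (build C s) j = liftR (nth hbot C j) (qs s j).
Proof. by move=> Hj; rewrite (nth_mktuple _ _ (Ordinal Hj)). Qed.

Lemma prj_build C s : size C = (m + 2).+1 -> map prj (build C s) = C.
Proof.
move=> HC; apply: (@eq_from_nth _ hbot); first by rewrite size_map size_tuple.
move=> j; rewrite size_map size_tuple => Hj.
by rewrite (nth_map hbot) ?size_tuple // nth_build // prj_liftR.
Qed.

Definition chainP (C : seq HP) := is_chain leP hbot htop C.
Definition chainR (D : seq HR) := is_chain leR hbot htop D.

Lemma chain_inl C : size C = (m + 2).+1 -> chainP C ->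
  forall j, 0 < j < m + 2 -> exists x, nth hbot C j = inl x /\ rankP x = j.-1.
Proof.
move=> HC /(chainE _ _ _ HC) [H0 Hc Htop].
have Hinl : forall j, 0 < j < m + 2 -> exists x, nth hbot C j = inl x.
  move=> [//|j] /andP[_ Hj].
  have c1 := Hc _ Hj; have c0 := Hc _ (ltnW Hj).
  move: c1 c0; case: (nth hbot C j.+1) => [x|[]] c1 c0; first by exists x.
    by rewrite covr_hat_t in c1.
  by rewrite covr_hat_b in c0.
elim=> [//|j IH] /andP[_ Hj].
have [x Hx] := Hinl j.+1 Hj; exists x; split => //.
case: j IH Hj Hx => [|j] IH Hj Hx.
  by have := Hc 0 (ltn_trans (ltnSn 0) Hj); rewrite H0 Hx covrP_bl => /(rank_min SP).
have [y [Hy ry]] := IH (ltnW Hj).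
have := Hc j.+1 (ltnW Hj); rewrite Hx Hy covr_hat_ll => /(rank_cov SP).
by rewrite ry.
Qed.

Lemma nth_map_prj (D : seq HR) j : nth hbot (map prj D) j = prj (nth hbot D j).
Proof. by elim: D j => [|a D IH] [|j] //=. Qed.

Lemma chain_proj (D : seq HR) : size D = (m + 2).+1 -> chainR D -> chainP (map prj D).
Proof.
move=> HD /(chainE _ _ _ HD) [H0 Hc Htop].
apply/(chainE _ _ _ (etrans (size_map _ _) HD)); split.
- by rewrite nth_map_prj H0.
- move=> j Hj; rewrite !nth_map_prj; have := Hc j Hj.
  case: (eqVneq (nth hbot D j.+1) htop) => [->|Hv].
    by rewrite covr_projTop.
  by rewrite covr_projT // => /andP[].
- by rewrite nth_map_prj Htop.
Qed.

Lemma pT_build C s j : size C = (m + 2).+1 -> chainP C -> j < m + 2 ->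
  pT (nth hbot (build C s) j) = qs s j.
Proof.
move=> HC Hch Hj; rewrite nth_build; last by apply: ltnW.
case: j Hj => [|j] Hj.
  by move/(chainE _ _ _ HC): Hch => [-> _ _]; rewrite qs0.
have [x [Hx rx]] := chain_inl HC Hch (j:=j.+1) Hj.
by rewrite Hx pT_liftR // rx qs_size.
Qed.

Lemma chain_build C s : size C = (m + 2).+1 -> chainP C -> chainR (build C s).
Proof.
move=> HC Hch; have := Hch; move/(chainE _ _ _ HC) => [H0 Hc Htop].
apply/(chainE _ _ _ (size_tuple _)); split.
- by rewrite nth_build // H0.
- move=> j Hj.
  case: (ltnP j.+1 (m + 2)) => Hj1.
    have [x [Hx _]] := chain_inl HC Hch (j:=j.+1) Hj1.
    have NT : nth hbot (build C s) j.+1 != htop by rewrite nth_build // Hx.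
    rewrite covr_projT // -!nth_map_prj prj_build // !pT_build // (Hc j Hj) /=.
    exact: qs_step.
  have E : j.+1 = m + 2 by apply/eqP; rewrite eqn_leq Hj1 Hj.
  rewrite E (@nth_build _ _ (m + 2)) // Htop /= covr_projTop -nth_map_prj prj_build // -Htop -E.
  exact: Hc.
- by rewrite nth_build // Htop.
Qed.


Definition steps (D : seq HR) : {ffun 'I_m -> option 'I_t} :=
  [ffun i : 'I_m => ohead (drop (size (pT (nth hbot D i.+1))) (pT (nth hbot D i.+2)))].

Lemma steps_build C s : size C = (m + 2).+1 -> chainP C -> steps (build C s) = s.
Proof.
move=> HC Hch; apply/ffunP => i; rewrite ffunE.
have i1 : i.+1 < m + 2 by have := ltn_ord i; lia.
have i2 : i.+2 < m + 2 by have := ltn_ord i; lia.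
rewrite !pT_build // (@qsS s i.+1) // drop_size_cat //= nth_fgraph_ord.
by case: (s i).
Qed.

Lemma D_inl (D : seq HR) : size D = (m + 2).+1 -> chainR D ->
  forall j, 0 < j < m + 2 -> exists a, nth hbot D j = inl a /\ rankP (pR a) = j.-1.
Proof.
move=> HD Hch j Hj.
have HC : size (map prj D) = (m + 2).+1 by rewrite size_map.
have [x [Hx rx]] := chain_inl HC (chain_proj HD Hch) Hj.
move: Hx; rewrite nth_map_prj; case: (nth hbot D j) => [a|b] //= [Ea].
by exists a; split => //; rewrite /pR Ea.
Qed.

Lemma ohead_seq (T : Type) (l : seq T) : size l <= 1 -> pmap id [:: ohead l] = l.
Proof. by case: l => [|a [|]]. Qed.

Lemma pT_steps (D : seq HR) : size D = (m + 2).+1 -> chainR D ->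
  forall j, 0 < j < m + 2 -> pT (nth hbot D j) = qs (steps D) j.
Proof.
move=> HD Hch; have := Hch; move/(chainE _ _ _ HD) => [H0 Hc Htop].
elim=> [//|j IH] Hj.
have [a [Ea ra]] := D_inl HD Hch Hj.
case: j IH Hj Ea ra => [|j] IH Hj Ea ra.
  rewrite qs1 Ea /=; apply/eqP; rewrite -size_eq0 -leqn0.
  by have := okR a; rewrite ra.
have Hj' : 0 < j.+1 < m + 2 by apply/andP; split => //; case/andP: Hj => _ /ltnW.
have := Hc j.+1 (ltnW (proj2 (andP Hj))).
rewrite covr_projT; last by rewrite Ea.
case/and3P => _ pre sz.
rewrite (@qsS _ j.+1) // -IH //.
have jm : j < m by case/andP: Hj => _; lia.
have -> : j.+1.-1 = nat_of_ord (Ordinal jm) by [].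
rewrite nth_fgraph_ord ffunE ohead_seq.
  by rewrite -{1}(cat_take_drop (size (pT (nth hbot D j.+1))) (pT (nth hbot D j.+2))) (eqP (etrans (esym (prefixE _ _)) pre)).
by rewrite size_drop leq_subLR addn1.
Qed.

Lemma build_steps (D : (m + 2).+1.-tuple HR) : chainR D -> build (map prj D) (steps D) = D.
Proof.
move=> Hch; have HD := size_tuple D.
have := Hch; move/(chainE _ _ _ HD) => [H0 Hc Htop].
apply: val_inj; apply: (@eq_from_nth _ hbot); first by rewrite !size_tuple.
move=> j; rewrite size_tuple => Hj.
rewrite nth_build // nth_map_prj.
case: j Hj => [|j] Hj; first by rewrite H0.
case: (ltnP j.+1 (m + 2)) => Hj1.
  have Hj' : 0 < j.+1 < m + 2 by [].
  have [a [Ea _]] := D_inl HD Hch Hj'.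
  rewrite -pT_steps // Ea /=; congr inl.
  exact: mkR_val.
have E : j.+1 = m + 2 by apply/eqP; rewrite eqn_leq Hj1 -ltnS Hj.
by rewrite E Htop.
Qed.

Definition bits (s : {ffun 'I_m -> option 'I_t}) : seq bool :=
  false :: rcons (map isSome (fgraph s)) false.

Lemma size_bits s : size (bits s) = m + 2.
Proof. by rewrite /= size_rcons size_map size_fgraph addn2. Qed.

Lemma lab_inl u a : @induced_lab _ P t n _ _ lamP u (inl a) =
  (lamP (prj u) (inl (pR a)), (pT u != qR a) && prefix (pT u) (qR a)).
Proof. by []. Qed.

Lemma lab_top u : @induced_lab _ P t n _ _ lamP u htop = (lamP (prj u) htop, false).
Proof. by []. Qed.

Lemma labels_build C s : size C = (m + 2).+1 -> chainP C ->
  labels (@induced_lab _ P t n _ _ lamP) (build C s) = zip (labels lamP C) (bits s).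
Proof.
move=> HC Hch; have := Hch; move/(chainE _ _ _ HC) => [H0 Hc Htop].
have SL : size (labels lamP C) = m + 2 by rewrite size_labels HC.
apply: (@eq_from_nth _ (lamP hbot hbot, false)).
  by rewrite size_labels size_tuple size_zip SL size_bits minnn.
move=> j; rewrite size_labels size_tuple => Hj.
rewrite nth_zip ?SL ?size_bits // (nth_labels _ _ hbot) ?size_tuple //.
rewrite (nth_labels _ _ hbot) ?HC //.
case: (ltnP j.+1 (m + 2)) => Hj1.
  have [x [Hx rx]] := chain_inl HC Hch (j:=j.+1) Hj1.
  have EB : nth hbot (build C s) j.+1 = inl (@mkR _ P t n x (qs s j.+1)) by rewrite nth_build // Hx.
  rewrite EB lab_inl mkR_p (mkR_q Hn); last by rewrite rx qs_size.
  rewrite -nth_map_prj prj_build // pT_build // -Hx; congr pair.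
  case: j Hj Hx rx EB Hj1 => [|j] Hj Hx rx EB Hj1; first by rewrite qs0 qs1.
  rewrite (@qsS s j.+1) //= nth_rcons size_map size_fgraph.
  have jm : j < m by lia.
  rewrite jm (nth_map None) ?size_fgraph //.
  case: (nth None (fgraph s) j) => [o|] /=; last by rewrite cats0 eqxx.
  rewrite prefix_prefix andbT; apply/negP => /eqP E.
  by have := f_equal size E; rewrite size_cat /= addn1 => /n_Sn.
have E : j.+1 = m + 2 by lia.
rewrite E (@nth_build _ _ (m + 2)) // Htop lab_top -nth_map_prj prj_build //.
congr pair; have -> : j = m.+1 by lia.
by rewrite /bits /= nth_rcons size_map size_fgraph ltnn eqxx.
Qed.


End Main.

Lemma size_ascs (A : Type) (r : A -> A -> bool) s : size (ascs r s) = (size s).-1.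
Proof. by rewrite /ascs size_map size_zip size_behead; case: s => //= _ s; lia. Qed.

Lemma nth_ascs (A : Type) (r : A -> A -> bool) (x0 : A) s i : i < (size s).-1 ->
  nth false (ascs r s) i = r (nth x0 s i) (nth x0 s i.+1).
Proof.
move=> Hi; rewrite /ascs (nth_map (x0, x0)); last by rewrite size_zip size_behead; case: s Hi => //= _ s; lia.
rewrite nth_zip_cond size_zip size_behead ifT /=; first by rewrite nth_behead.
case: s Hi => //= _ s; lia.
Qed.

Lemma count_nth (s : seq bool) : count id s = \sum_(i < size s) nth false s i.
Proof. by elim: s => [|b s IH]; rewrite ?big_ord0 // big_ord_recl /= IH. Qed.

Lemma nth_bits0 t m (s : {ffun 'I_m -> option 'I_t}) : nth false (bits s) 0 = false.
Proof. by []. Qed.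

Lemma nth_bitsS t m (s : {ffun 'I_m -> option 'I_t}) (k : 'I_m) :
  nth false (bits s) k.+1 = isSome (s k).
Proof.
rewrite /bits /= nth_rcons size_map size_fgraph ltn_ord (nth_map None) ?size_fgraph //.
by rewrite nth_fgraph_ord.
Qed.

Lemma nth_bitsm t m (s : {ffun 'I_m -> option 'I_t}) : nth false (bits s) m.+1 = false.
Proof. by rewrite /bits /= nth_rcons size_map size_fgraph ltnn eqxx. Qed.

Section Word.
Context {dL : Order.disp_t} {L : porderType dL} (t m : nat) (w : seq L).
Hypothesis Hw : size w = m + 2.

Definition aw i := nth false (ascs <=%O w) i.

Definition Fam (k : 'I_m) : pred (option 'I_t) :=
  [pred o | (aw k.+1 ==> isSome o) && (aw k ==> ~~ isSome o)].

Lemma af_zip (s : {ffun 'I_m -> option 'I_t}) :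
  ascent_free prod_le (zip w (bits s)) = ~~ aw 0 && [forall k, s k \in Fam k].
Proof.
have x0 : L by case E: w => [|x0 ws] //; move: Hw; rewrite E addn2.
have SZ : size (zip w (bits s)) = m + 2 by rewrite size_zip Hw size_bits minnn.
have key : forall i, i < m + 1 -> nth false (ascs prod_le (zip w (bits s))) i =
    aw i && (nth false (bits s) i ==> nth false (bits s) i.+1).
  move=> i Hi; rewrite (nth_ascs _ (x0, false)); last by rewrite SZ; lia.
  rewrite !nth_zip ?Hw ?size_bits // /prod_le /= /aw (nth_ascs _ x0) // Hw; lia.
rewrite /ascent_free; apply/idP/idP.
  move/(has_nthP false) => H.
  have H' : forall i, i < m + 1 -> ~~ (aw i && (nth false (bits s) i ==> nth false (bits s) i.+1)).
    move=> i Hi; apply/negP => Hc; apply: H; exists i; first by rewrite size_ascs SZ; lia.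
    by rewrite key.
  apply/andP; split; first by have := H' 0; rewrite nth_bits0 /= andbT addn1 => /(_ isT).
  apply/forallP => k; rewrite inE; apply/andP; split.
    have := H' k.+1; rewrite nth_bitsS addn1 ltnS ltn_ord => /(_ isT).
    by case: (aw k.+1); case: (isSome (s k)).
  have Hk : k < m + 1 by rewrite addn1 ltnS ltnW.
  have := H' k Hk; rewrite nth_bitsS.
  by case: (aw k); case: (isSome (s k)); rewrite ?implybT ?andbF.
case/andP => a0 /forallP HF; apply/(has_nthP false) => -[i]; rewrite size_ascs SZ addn2 /= => Hi.
rewrite key //; case: i Hi => [|i] Hi; first by rewrite (negbTE a0).
have im : i < m by rewrite -ltnS.
have /andP[F1 F2] : (aw i.+1 ==> isSome (s (Ordinal im))) && (aw i ==> ~~ isSome (s (Ordinal im))) := HF (Ordinal im).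
rewrite (nth_bitsS s (Ordinal im)).
case: (ltnP i.+1 m) => Him.
  have /andP[_ F2'] : (aw i.+2 ==> isSome (s (Ordinal Him))) && (aw i.+1 ==> ~~ isSome (s (Ordinal Him))) := HF (Ordinal Him).
  rewrite (nth_bitsS s (Ordinal Him)).
  by move: F1 F2'; case: (aw i.+1); case: (s (Ordinal im)) => [?|]; case: (s (Ordinal Him)) => [?|].
have E : i.+1 = m by apply/eqP; rewrite eqn_leq Him im.
rewrite -[i.+2]/(i.+1).+1 E nth_bitsm implybF.
by move: F1; rewrite E; case: (aw m); case: (s (Ordinal im)).
all: by rewrite addn1.
Qed.


Lemma card_af : #|[pred s : {ffun 'I_m -> option 'I_t} | ascent_free prod_le (zip w (bits s))]|
  = (~~ aw 0) * \prod_(k < m) #|Fam k|.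
Proof.
rewrite (eq_card (B := [pred s : {ffun 'I_m -> option 'I_t} | ~~ aw 0 && (s \in family Fam)])); last first.
  by move=> s; rewrite !inE af_zip; congr andb; apply/forallP/familyP.
case: (aw 0) => /=.
  by rewrite mul0n; apply: eq_card0 => s; rewrite !inE.
rewrite mul1n (eq_card (B := family Fam)); last by move=> s; rewrite !inE.
rewrite card_family /(image _ _) /= -[RHS]big_enum /=.
by elim: (enum 'I_m) => [|k e IH]; rewrite ?big_nil ?big_cons //= IH.
Qed.

Lemma card_isSome : #|[pred o : option 'I_t | isSome o]| = t.
Proof.
rewrite (eq_card (B := predC1 None)); first by rewrite cardC1 card_option card_ord.
by case.
Qed.

Lemma card_Fam k : #|Fam k| =
  if aw k.+1 && aw k then 0 else if aw k.+1 then t else if aw k then 1 else t.+1.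
Proof.
rewrite /Fam; case: (aw k.+1); case: (aw k) => /=.
- by apply: eq_card0 => o; rewrite inE; case: o.
- by rewrite -[RHS]card_isSome; apply: eq_card => o; rewrite !inE andbT.
- by rewrite (eq_card (B := pred1 None)) ?card1 //; case.
- by rewrite (eq_card (B := predT)) ?card_option ?card_ord //; case.
Qed.

Lemma NDA_aw : NDA <=%O (m + 2) w = [forall k : 'I_m, ~~ (aw k && aw k.+1)].
Proof.
have SA : size (ascs <=%O w) = m.+1 by rewrite size_ascs Hw addn2.
have SZ : size (zip (ascs <=%O w) (behead (ascs <=%O w))) = m by rewrite size_zip size_behead SA; lia.
rewrite /NDA Hw eqxx /=; apply/idP/forallP.
  move=> H k; apply/negP => Hk; move: H; apply/negP; rewrite negbK.
  apply/(has_nthP (false, false)); exists k; first by rewrite SZ.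
  rewrite nth_zip_cond SZ ltn_ord /= nth_behead.
  exact: Hk.
move=> H; apply/negP => /(has_nthP (false, false)) [k]; rewrite SZ => km.
rewrite nth_zip_cond SZ km /= nth_behead.
by have := H (Ordinal km); move/negP.
Qed.

Lemma asc_sum : asc <=%O w = \sum_(i < m.+1) aw i.
Proof.
rewrite /asc count_nth size_ascs Hw addn2 /=.
by [].
Qed.

Definition gw : nat :=
  if NDA <=%O (m + 2) w && ~~ aw 0
  then t ^ asc <=%O w * (1 + t) ^ (m + aw m - 2 * asc <=%O w) else 0.

Lemma card_af_g : #|[pred s : {ffun 'I_m -> option 'I_t} | ascent_free prod_le (zip w (bits s))]| = gw.
Proof.
rewrite card_af /gw NDA_aw.
case: (boolP (aw 0)) => a0 /=; first by rewrite andbF mul0n.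
rewrite andbT mul1n.
case: (boolP [forall k : 'I_m, ~~ (aw k && aw k.+1)]) => H; last first.
  move: H => /forallPn [k]; rewrite negbK => Hk.
  rewrite (bigD1 k) //= card_Fam andbC Hk.
  by [].
have E : forall k : 'I_m, #|Fam k| = t ^ aw k.+1 * (1 + t) ^ (1 - (aw k + aw k.+1)).
  move=> k; rewrite card_Fam; have := forallP H k.
  by case: (aw k.+1); case: (aw k) => //=; rewrite ?expn1 ?muln1 ?mul1n ?add1n.
rewrite (eq_bigr _ (fun k _ => E k)) big_split /= -!expn_sum.
have S1 : \sum_(k < m) aw k.+1 = asc <=%O w.
  by rewrite asc_sum big_ord_recl (negbTE a0).
have S2 : \sum_(k < m) aw k + aw m = asc <=%O w.
  by rewrite asc_sum big_ord_recr.
have S3 : \sum_(k < m) (1 - (aw k + aw k.+1)) + \sum_(k < m) (aw k + aw k.+1) = m.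
  rewrite -big_split /=.
  rewrite (eq_bigr (fun _ => 1)) ?sum1_card ?card_ord //.
  move=> k _; have := forallP H k.
  by case: (aw k.+1); case: (aw k).
have S4 : \sum_(k < m) (aw k + aw k.+1) = \sum_(k < m) aw k + \sum_(k < m) aw k.+1 by rewrite big_split.
congr (_ * _); congr (_ ^ _); first exact: S1.
rewrite S4 in S3; move: S1 S2 S3; set A := \sum_(k < m) aw k; set B := \sum_(k < m) aw k.+1; set C := \sum_(k < m) (1 - _); set D := asc _ _. lia.
Qed.

End Word.

Lemma sum_pick_seq (T : eqType) (r : seq T) (x : T) (F : T -> nat) :
  uniq r -> x \in r -> \sum_(y <- r) (if x == y then F y else 0) = F x.
Proof.
move=> U xr; rewrite (big_rem x) //= eqxx big1_seq ?addn0 //.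
move=> y /andP[_ yr]; case: eqP => // E; subst y.
by rewrite mem_rem_uniqF in yr.
Qed.

Section Final.
Context {d : Order.disp_t} (P : finPOrderType d) (t n m : nat).
Context {dL : Order.disp_t} {L : porderType dL} (lamP : hatT P -> hatT P -> L).
Hypothesis SP : semipure P.
Hypothesis Hn : forall x : P, (rankP x <= n)%N.
Variable x0 : P.

Notation HP := (hatT P).
Notation HR := (hatT (Rees P t n)).
Notation leP := (hat_le (<=%O : rel P)).
Notation leR := (hat_le (@rees_le _ P t n)).
Notation prj := (@proj_P _ P t n).

Lemma LHS_count :
  nchains leR hbot htop (@induced_lab _ P t n _ _ lamP) (m + 2) (ascent_free prod_le)
  = \sum_(C : (m + 2).+1.-tuple HP | chainP C)
      #|[pred s : {ffun 'I_m -> option 'I_t} | ascent_free prod_le (zip (labels lamP C) (bits s))]|.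
Proof.
pose Q := [pred p : (m + 2).+1.-tuple HP * {ffun 'I_m -> option 'I_t} |
            chainP p.1 && ascent_free prod_le (zip (labels lamP p.1) (bits p.2))].
pose f := fun p : (m + 2).+1.-tuple HP * {ffun 'I_m -> option 'I_t} => build n (tval p.1) p.2.
rewrite /nchains.
transitivity #|f @: Q|.
  apply: eq_card => D; rewrite !inE; apply/idP/imsetP.
    case/andP => Hch Haf.
    have HD := size_tuple D.
    have HC := @chain_proj d P t n m SP Hn x0 D HD Hch.
    have HCs : size (map prj D) = (m + 2).+1 by rewrite size_map.
    have BS := @build_steps d P t n m SP Hn x0 D Hch.
    exists (map_tuple prj D, steps m D).
      rewrite inE; apply/andP; split; first exact: HC.
      have := Haf; rewrite -{1}BS (@labels_build d P t n m dL L lamP SP Hn _ _ HCs HC).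
      by [].
    by rewrite /f /= BS.
  case=> [[C s]]; rewrite inE /= => /andP[Hch Haf] ->.
  have HC := size_tuple C.
  apply/andP; split; first exact: (@chain_build d P t n m SP Hn x0 C s HC Hch).
  by rewrite (@labels_build d P t n m dL L lamP SP Hn _ _ HC Hch).
rewrite card_in_imset; last first.
  move=> [C1 s1] [C2 s2]; rewrite !inE /= => /andP[H1 _] /andP[H2 _]; rewrite /f /= => E.
  have EC : C1 = C2.
    apply: val_inj; rewrite /= -(@prj_build d P t n m C1 s1 (size_tuple C1)) -(@prj_build d P t n m C2 s2 (size_tuple C2)).
    by rewrite E.
  subst C2; congr pair.
  by rewrite -(@steps_build d P t n m SP Hn C1 s1 (size_tuple C1) H1) -(@steps_build d P t n m SP Hn C1 s2 (size_tuple C1) H2) E.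
rewrite -sum1_card.
under [RHS]eq_bigr do rewrite -sum1_card.
rewrite pair_big_dep /=.
by apply: eq_bigl => -[C s].
Qed.


Lemma RHS_eq :
  let c := fun w : seq L =>
    nchains leP hbot htop lamP (m + 2) (fun w' => w' == w) in
  let W := undup [seq labels lamP (tval ch) |
                  ch <- enum [pred ch : (m + 2).+1.-tuple HP | is_chain leP hbot htop ch]] in
  (\sum_(w <- W | [&& NDA <=%O (m + 2) w, ~~ nth false (ascs <=%O w) 0
                        & ~~ nth false (ascs <=%O w) m])
        c w * t ^ asc <=%O w * (1 + t) ^ (m - 2 * asc <=%O w)
   + \sum_(w <- W | [&& NDA <=%O (m + 2) w, ~~ nth false (ascs <=%O w) 0
                        & nth false (ascs <=%O w) m])
        c w * t ^ asc <=%O w * (1 + t) ^ (m + 1 - 2 * asc <=%O w))%N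
  = \sum_(C : (m + 2).+1.-tuple HP | chainP C) gw t m (labels lamP C).
Proof.
move=> c W.
rewrite big_mkcond [X in (_ + X)%N]big_mkcond -big_split /=.
transitivity (\sum_(w <- W) c w * gw t m w)%N.
  apply: eq_bigr => w _; rewrite /gw /aw.
  case: (NDA _ _ _); case: (nth false (ascs <=%O w) 0); case: (nth false (ascs <=%O w) m);
    by rewrite /= ?addn0 ?add0n ?muln0 ?mulnA ?addn1.
under eq_bigr => w _ do rewrite /c /nchains -sum_nat_const big_mkcond /=.
rewrite exchange_big /= [RHS]big_mkcond /=.
apply: eq_bigr => C _.
rewrite /chainP; case: (boolP (is_chain leP hbot htop C)) => HC /=.
  rewrite -[RHS](@sum_pick_seq _ W (labels lamP C) (gw t m)); first by apply: eq_bigr => w _; rewrite !inE HC /= eq_sym.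
    exact: undup_uniq.
  rewrite mem_undup; apply/mapP; exists C => //.
  by rewrite mem_enum inE.
by rewrite big1 // => w _; rewrite !inE (negbTE HC).
Qed.

End Final.

Local Open Scope order_scope.

Theorem theorem3p4 (d : Order.disp_t) (P : finPOrderType d) (n t : nat)
  (dL : Order.disp_t) (L : porderType dL) (lamP : hatT P -> hatT P -> L) (m : nat) :
  semipure P -> poset_length P n -> (1 <= t)%N ->
  EL_labeling (hat_le (<=%O : rel P)) lamP ->
  let c := fun w : seq L =>
    nchains (hat_le (<=%O : rel P)) hbot htop lamP (m + 2) (fun w' => w' == w) in
  let W := undup [seq labels lamP (tval ch) |
                  ch <- enum [pred ch : (m + 2).+1.-tuple (hatT P) |
                              is_chain (hat_le (<=%O : rel P)) hbot htop ch]] in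
  nchains (hat_le (@rees_le _ P t n)) hbot htop (@induced_lab _ P t n _ _ lamP) (m + 2)
          (ascent_free prod_le)
  = (\sum_(w <- W | [&& NDA <=%O (m + 2) w, ~~ nth false (ascs <=%O w) 0
                        & ~~ nth false (ascs <=%O w) m])
        c w * t ^ asc <=%O w * (1 + t) ^ (m - 2 * asc <=%O w)
   + \sum_(w <- W | [&& NDA <=%O (m + 2) w, ~~ nth false (ascs <=%O w) 0
                        & nth false (ascs <=%O w) m])
        c w * t ^ asc <=%O w * (1 + t) ^ (m + 1 - 2 * asc <=%O w))%N.
Proof.
move=> SP [[x0 _] Hn] _ _ c W.
rewrite (LHS_count t m lamP SP Hn x0) (RHS_eq t m lamP).
apply: eq_bigr => C HC.
apply: card_af_g.
by rewrite size_labels size_tuple.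
Qed.
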